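(* Given a positive integer $n$, there exists a constant $\delta_n>0$ depending only on $n$ such that for any integer $d\ge2$, any $0\ne a\in\mathbb{Z}/d\mathbb{Z}$, and any subgroup $H\subset G=(\mathbb{Z}/d\mathbb{Z})^\times$ of index $\le n$, $$\frac{1}{|H|}\sum_{t\in H}\left\langle\frac{ta}{d}\right\rangle>\delta_n.$$
   Context: For a real number $x$, $\langle x\rangle$ denotes its fractional part: $0\le\langle x\rangle<1$ and $x-\langle x\rangle\in\mathbb{Z}$. For $ta\in\mathbb{Z}/d\mathbb{Z}$, $\langle ta/d\rangle$ is computed using any integer representative. *)

(* Defs.v *)
From HB Require Import structures.
From mathcomp Require Import all_boot all_order all_algebra all_fingroup.
Set Implicit Arguments. Unset Strict Implicit. Unset Printing Implicit Defensive.
Import Order.TTheory GRing.Theory Num.Theory.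
Local Open Scope ring_scope.

Definition fracZ (d : nat) (x : 'Z_d) : rat := (nat_of_ord x)%:R / d%:R.

(* Main.v *)
Require Import Defs.
From HB Require Import structures.
From mathcomp Require Import all_boot all_order all_algebra all_fingroup.
From mathcomp Require Import zify.
Import Order.TTheory GRing.Theory Num.Theory.


Definition tv {d : nat} (t : {unit 'Z_(d.+2)}) : nat := nat_of_ord (val t).

Lemma tvM d (t k : {unit 'Z_(d.+2)}) : tv (t * k)%g = (tv t * tv k) %% d.+2.
Proof. reflexivity. Qed.

Lemma tv1 d : tv (1%g : {unit 'Z_(d.+2)}) = 1.
Proof. by rewrite /tv /= modn_small. Qed.

Lemma tv_coprime d (t : {unit 'Z_(d.+2)}) : coprime d.+2 (tv t).
Proof. have := valP t. by rewrite -[val t]natr_Zp unitZpE // natr_Zp. Qed.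

Lemma tvV d (t : {unit 'Z_(d.+2)}) : (tv (t^-1)%g * tv t) %% d.+2 = 1.
Proof. by rewrite -tvM mulVg tv1. Qed.

Lemma cancel_mod e c x y : coprime c e -> (x * c == y * c %[mod e]) -> (x == y %[mod e]).
Proof.
move=> ce.
wlog le: x y / y <= x.
  move=> W; case: (leqP y x) => [h|h]; first exact: W.
  rewrite eq_sym => /W; rewrite eq_sym; apply; exact: ltnW.
rewrite eqn_mod_dvd; last by rewrite leq_mul2r le orbT.
rewrite -mulnBl Gauss_dvdl ?eqn_mod_dvd //.
by rewrite coprime_sym.
Qed.

Lemma prod_ite k N : \prod_(0 <= p < k) (if p < N then N else 1) = N ^ (minn k N).
Proof.
elim: k => [|k IH]; first by rewrite big_geq // min0n.
rewrite big_nat_recr //= IH.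
case: (ltnP k N) => h.
  by rewrite (minn_idPl h) expnS mulnC.
by rewrite muln1 (minn_idPr (leqW h)).
Qed.

Lemma bound_e e N : 0 < e -> 0 < N -> (forall p, p < e.+1 -> p ^ logn p e < N) -> e <= N ^ N.
Proof.
move=> e0 N0 hp.
rewrite -{1}(partnT e0) /partn.
apply: (leq_trans (n := \prod_(0 <= p < e.+1) (if p < N then N else 1))).
  rewrite big_mkcond /= big_nat [X in _ <= X]big_nat; apply: leq_prod => p /andP[_ hpe].
  have := hp p hpe.
  case: (posnP (logn p e)) => [-> | lp] /=.
    by case: ifP.
  move=> h; have pN : p < N.
    apply: leq_ltn_trans h; rewrite -[X in X <= _]expn1; apply: leq_pexp2l => //.
    rewrite lt0n; apply/negP => /eqP p0. by move: lp; rewrite p0 /logn.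
  by rewrite pN ltnW.
by rewrite prod_ite leq_pexp2l ?geq_minr.
Qed.


Lemma tvM_mod d f (t k : {unit 'Z_(d.+2)}) : f %| d.+2 ->
  tv (t * k)%g = tv t * tv k %[mod f].
Proof. by move=> fd; rewrite tvM modn_dvdm. Qed.

Lemma KG_group d m : m %| d.+2 ->
  group_set [set k : {unit 'Z_(d.+2)} | tv k %% m == 1 %% m].
Proof.
move=> md; apply/group_setP; split; first by rewrite inE tv1.
move=> x y; rewrite !inE => /eqP hx /eqP hy.
by rewrite (tvM_mod _ _ _ _ md) -modnMm hx hy modnMm muln1.
Qed.

Lemma stepA (gT : finGroupType) n (H K : {group gT}) :
  #|[set: gT] : H|%g <= n -> #|K| <= n * #|H :&: K|.
Proof.
move=> hn.
have h1 := mul_cardG H K.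
have h2 : #|(H * K)%g| <= #|[set: gT]| by apply: subset_leq_card; apply: subsetT.
have h3 := Lagrange (subsetT H).
have hH := cardG_gt0 H.
rewrite -(leq_pmul2l hH) mulnA (mulnC _ n) -mulnA. rewrite h1.
apply: (leq_trans (leq_mul h2 (leqnn _))).
rewrite -h3 mulnA leq_mul2r; apply/orP; right.
by rewrite mulnC leq_mul2r hn orbT.
Qed.

Lemma stepB p q c : prime p -> p %| q -> coprime c p ->
  q <= 2 * #|[set j : 'I_q | coprime p (1 + j * c)]|.
Proof.
move=> pp pq cp.
set G := [set j : 'I_q | coprime p (1 + j * c)].
have hc := cardsC G. rewrite card_ord in hc.
have p0 := prime_gt0 pp.
have p1 := prime_gt1 pp.
have bad: #|~: G| * p <= q.
  pose f (x : 'I_q * 'I_p) : 'I_q := insubd x.1 ((x.1 %/ p) * p + x.2).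
  have fv x : val (f x) = (x.1 %/ p) * p + x.2.
    rewrite /f val_insubd.
    have -> : (x.1 %/ p * p + x.2 < q). 
      have h1 : x.1 %/ p < q %/ p by rewrite ltn_divLR // divnK.
      have h2 : (x.1 %/ p).+1 * p <= q %/ p * p by rewrite leq_mul2r h1 orbT.
      rewrite divnK // in h2.
      apply: (leq_trans _ h2); rewrite mulSn addnC ltn_add2r; exact: ltn_ord.
    by [].
  have := card_in_imset (f := f) (D := setX (~: G) [set: 'I_p]).
  rewrite cardsX cardsT card_ord => <-; last first.
    move=> [x1 x2] [y1 y2]; rewrite !inE /= !andbT => hx hy /(congr1 val).
    rewrite !fv => e.
    have e2 : x2 = y2 :> nat.
      by have := congr1 (modn^~ p) e; rewrite /= !modnMDl !modn_small.
    have e1 : x1 %/ p = y1 %/ p.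
      have := congr1 (divn^~ p) e; rewrite /= !divnMDl // (divn_small (ltn_ord x2)) (divn_small (ltn_ord y2)).
      by rewrite !addn0.
    have e3 : x1 %% p = y1 %% p.
      rewrite !prime_coprime // !negbK in hx hy.
      apply/eqP; apply: (cancel_mod _ c); first by [].
      rewrite -(eqn_modDl 1).
      by move: hx hy; rewrite /dvdn => /eqP -> /eqP ->.
    congr (_, _); apply: val_inj => /=; last by [].
    by rewrite (divn_eq x1 p) (divn_eq y1 p) e1 e3.
  by apply: (leq_trans (max_card _)); rewrite card_ord.
have : 2 * #|~: G| <= q.
  apply: leq_trans bad; by rewrite mulnC leq_mul2l p1 orbT.
move: hc; set a := #|G|; set b := #|~: G|; lia.
Qed.


Lemma stepC d p k m w q :
  prime p -> 0 < m -> coprime w q -> d.+2 = w * p ^ k -> m * q %| d.+2 ->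
  #|[set j : 'I_q | coprime p (1 + j * (m * w))]| *
  #|[set l : {unit 'Z_(d.+2)} | tv l %% (m * q) == 1 %% (m * q)]| <=
  #|[set x : {unit 'Z_(d.+2)} | tv x %% m == 1 %% m]|.
Proof.
move=> pp m0 wq dE eD.
set c := m * w.
set Good := [set j : 'I_q | coprime p (1 + j * c)].
set E := [set l : {unit 'Z_(d.+2)} | tv l %% (m * q) == 1 %% (m * q)].
pose u (j : 'I_q) : {unit 'Z_(d.+2)} := insubd (1%g : {unit 'Z_(d.+2)}) (((1 + j * c)%N%:R)%R : 'Z_(d.+2)).
have mD : m %| d.+2 by apply: dvdn_trans eD; apply: dvdn_mulr.
have tu j : j \in Good -> tv (u j) = (1 + j * c) %% d.+2.
  rewrite inE => hj.
  have cu : coprime d.+2 (1 + j * c).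
    rewrite dE coprimeMl; apply/andP; split.
      by rewrite /coprime /c mulnA addnC gcdnMDl gcdn1.
    by apply: coprimeXl.
  by rewrite /tv /u val_insubd unitZpE // cu val_Zp_nat.
pose f (x : 'I_q * {unit 'Z_(d.+2)}) := (u x.1 * x.2)%g.
have := card_in_imset (f := f) (D := setX Good E).
rewrite cardsX => <-; last first.
  move=> [j1 l1] [j2 l2]; rewrite !in_setX => /andP[g1 e1] /andP[g2 e2] h.
  have {g1}g1 : j1 \in Good := g1. have {g2}g2 : j2 \in Good := g2.
  have {e1}e1 : l1 \in E := e1. have {e2}e2 : l2 \in E := e2.
  rewrite !inE in e1 e2.
  have {h}h : (u j1 * l1 = u j2 * l2)%g := h.
  have hm := congr1 (fun x => tv x %% (m * q)) h.
  rewrite (tvM_mod _ _ (u j1) l1 eD) (tvM_mod _ _ (u j2) l2 eD) in hm.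
  rewrite -(modnMmr (tv (u j1))) -(modnMmr (tv (u j2))) (eqP e1) (eqP e2) !modnMmr !muln1 in hm.
  rewrite !tu // !(modn_dvdm _ eD) in hm.
  have hj : j1 = j2.
    apply: val_inj => /=.
    move/eqP: hm; rewrite eqn_modDl => /eqP hm.
    have r1 : j1 * c = j1 * w * m by rewrite /c; lia.
    have r2 : j2 * c = j2 * w * m by rewrite /c; lia.
    rewrite r1 r2 (mulnC m q) -!muln_modl in hm.
    have hm2 : j1 * w %% q = j2 * w %% q by apply/eqP; rewrite -(eqn_pmul2r m0) hm.
    have := cancel_mod _ _ _ _ wq (introT eqP hm2).
    by move/eqP; rewrite (modn_small (ltn_ord j1)) (modn_small (ltn_ord j2)).
  subst j2; have := congr1 (mulg (u j1)^-1) h; by rewrite !mulKg => ->.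
apply: subset_leq_card; apply/subsetP => y /imsetP [[j l]]; rewrite !inE /= => /andP[gj el] ->.
rewrite /f (tvM_mod _ _ _ _ mD) -modnMmr.
have -> : tv l %% m = 1 %% m.
  have mq : m %| m * q by apply: dvdn_mulr.
  by rewrite -(modn_dvdm _ mq) (eqP el) modn_dvdm.
rewrite modnMmr muln1 tu; last by rewrite inE /=.
rewrite modn_dvdm //.
have -> : 1 + j * c = (j * w) * m + 1 by rewrite /c; lia.
by rewrite modnMDl.
Qed.


Lemma xx_mod d e b (t x : {unit 'Z_(d.+2)}) : e %| d.+2 ->
  (tv (t * x)%g * b) %% e = (tv x * (tv t * b)) %% e.
Proof.
move=> ed. rewrite -modnMml (tvM_mod _ _ t x ed) modnMml.
by rewrite mulnCA mulnA.
Qed.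

Lemma xx_modm d e m b (t x : {unit 'Z_(d.+2)}) : e %| d.+2 -> m %| e ->
  tv x %% m = 1 %% m ->
  ((tv (t * x)%g * b) %% e) %% m = (tv t * b) %% m.
Proof.
move=> ed me hx.
rewrite (xx_mod _ _ _ _ _ ed) modn_dvdm // -modnMml hx modnMml mul1n //.
Qed.

Lemma fiber d e m b J (K : {group {unit 'Z_(d.+2)}}) (t : {unit 'Z_(d.+2)}) :
  e %| d.+2 -> m %| e -> 0 < m -> coprime (tv t * b) e ->
  K \subset [set k : {unit 'Z_(d.+2)} | tv k %% m == 1 %% m] ->
  #|[set k in K | ((tv (t * k)%g * b) %% e) %/ m < J]| <=
  J * #|[set l : {unit 'Z_(d.+2)} | tv l %% e == 1 %% e]|.
Proof.
move=> ed me m0 cop KG.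
set E := [set l : {unit 'Z_(d.+2)} | tv l %% e == 1 %% e].
pose jj (k : {unit 'Z_(d.+2)}) := ((tv (t * k)%g * b) %% e) %/ m.
set S := [set k in K | _].
pose rep (j : nat) : {unit 'Z_(d.+2)} := odflt 1%g [pick k in K | jj k == j].
pose R := [set rep (val j) | j : 'I_J].
have cR : #|R| <= J by apply: (leq_trans (leq_imset_card _ _)); rewrite card_ord.
pose f (k : {unit 'Z_(d.+2)}) := (rep (jj k), ((rep (jj k))^-1 * k)%g).
have finj : injective f.
  move=> k1 k2 h.
  have h1 : rep (jj k1) = rep (jj k2) := congr1 fst h.
  have h2 : ((rep (jj k1))^-1 * k1 = (rep (jj k2))^-1 * k2)%g := congr1 snd h.
  move: h2; rewrite h1 => h2.
  by have := congr1 (mulg (rep (jj k2))) h2; rewrite !mulKVg.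
have modK x : x \in K -> ((tv (t * x)%g * b) %% e) %% m = (tv t * b) %% m.
  move=> xK; apply: xx_modm => //.
  by have := subsetP KG x xK; rewrite inE => /eqP.
rewrite -(card_imset S finj).
apply: (leq_trans (n := #|setX R E|)); last by rewrite cardsX; apply: leq_mul.
apply: subset_leq_card; apply/subsetP => y /imsetP [k]; rewrite inE => /andP[kK kJ] ->.
rewrite in_setX; apply/andP; split.
  by apply/imsetP; exists (Ordinal kJ).
rewrite inE.
rewrite /rep; case: pickP => [r /andP[rK /eqP rj] | none]; last first.
  by have := none k; rewrite kK eqxx.
rewrite /=.
have xr : (tv (t * r)%g * b) %% e = (tv (t * k)%g * b) %% e.
  rewrite (divn_eq ((tv (t * r)%g * b) %% e) m) (divn_eq ((tv (t * k)%g * b) %% e) m).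
  rewrite !modK //. by congr (_ * _ + _).
rewrite !(xx_mod _ _ _ _ _ ed) in xr.
have := cancel_mod _ _ _ _ cop (introT eqP xr) => /eqP hrk.
rewrite (tvM_mod _ _ _ _ ed) -modnMmr -hrk modnMmr -(tvM_mod _ _ _ _ ed).
by rewrite mulVg tv1.
Qed.


Lemma sumK_bound d e m q b n (K : {group {unit 'Z_(d.+2)}}) (t : {unit 'Z_(d.+2)}) :
  0 < n -> e = m * q -> 0 < m -> e %| d.+2 -> coprime (tv t * b) e ->
  K \subset [set k : {unit 'Z_(d.+2)} | tv k %% m == 1 %% m] ->
  4 * n <= q ->
  2 * (q %/ (4 * n)) * #|[set l : {unit 'Z_(d.+2)} | tv l %% e == 1 %% e]| <= #|K| ->
  e * #|K| <= 16 * n * \sum_(k in K) (tv (t * k)%g * b) %% e.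
Proof.
move=> n0 em m0 ed cop KG qN hK.
set J := q %/ (4 * n).
set Ec := #|[set l : {unit 'Z_(d.+2)} | _]| in hK.
pose jj (k : {unit 'Z_(d.+2)}) := ((tv (t * k)%g * b) %% e) %/ m.
have me : m %| e by rewrite em dvdn_mulr.
have hS := fiber d e m b J K t ed me m0 cop KG.
rewrite -/Ec in hS.
set S := [set k in K | _] in hS.
have D3 : J * #|K| <= \sum_(k in K) jj k + J * #|S|.
  have -> : #|S| = \sum_(k in K) ((jj k < J) : nat).
    rewrite -sum1_card (eq_bigl (fun k => (k \in K) && (jj k < J))); last by move=> k; rewrite inE.
    rewrite big_mkcondr /=; apply: eq_bigr => k _; by case: (jj k < J).
  rewrite mulnC -sum_nat_const big_distrr -big_split /=.
  apply: leq_sum => k _.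
  by case: (ltnP (jj k) J) => h; rewrite ?muln1 ?muln0 ?addn0 // leq_addl.
have D4 : m * \sum_(k in K) jj k <= \sum_(k in K) (tv (t * k)%g * b) %% e.
  rewrite big_distrr /=; apply: leq_sum => k _.
  by rewrite mulnC leq_trunc_div.
set Y := \sum_(k in K) jj k in D3 D4.
set X := \sum_(k in K) _ in D4 *.
have J1 : 0 < J by rewrite divn_gt0 // muln_gt0.
have qJ : q < J.+1 * (4 * n) by rewrite ltn_ceil // muln_gt0.
have S1 : J * #|K| <= 2 * Y.
  have : J * #|K| <= Y + J * (J * Ec) by apply: (leq_trans D3); rewrite leq_add2l leq_mul2l hS orbT.
  move: hK; set k := #|K|; nia.
rewrite em.
set k := #|K| in S1 *.
nia.
Qed.


Lemma arith1 n q Ec k : 0 < n -> q * Ec <= 2 * n * k -> q %/ (4 * n) * (4 * n) <= q ->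
  2 * (q %/ (4 * n)) * Ec <= k.
Proof.
move=> n0 h1 h2. move: (q %/ (4 * n)) h2 => J h2.
have h3 : J * (4 * n) * Ec <= 2 * n * k by apply: leq_trans h1; rewrite leq_mul2r h2 orbT.
have h4 : J * (4 * n) * Ec = (2 * n) * (2 * J * Ec) by lia.
by rewrite h4 leq_pmul2l ?muln_gt0 in h3.
Qed.

Lemma big_case n d e b p (H : {group {unit 'Z_(d.+2)}}) :
  0 < n -> e %| d.+2 -> 1 < e -> coprime b e ->
  #|[set: {unit 'Z_(d.+2)}] : H|%g <= n ->
  prime p -> 4 * n <= p ^ logn p e ->
  e * #|H| <= 16 * n * \sum_(t in H) (tv t * b) %% e.
Proof.
move=> n0 ed e1 cb hn pp qN.
set q := p ^ logn p e in qN.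
have e0 : 0 < e by apply: ltnW.
have [m cpm em] := pfactor_coprime pp e0.
rewrite -/q in em.
have [w cpw dw] := pfactor_coprime pp (ltn0Sn d.+1).
have m0 : 0 < m by move: e0; rewrite em muln_gt0 => /andP[].
have mD : m %| d.+2 by apply: dvdn_trans ed; rewrite em dvdn_mulr.
have wq : coprime w q by rewrite /q coprimeXr // coprime_sym.
have v0 : 0 < logn p e.
  rewrite lt0n; apply/negP => /eqP h; move: qN; rewrite /q h expn0; lia.
have pq : p %| q by rewrite /q -(prednK v0) expnS dvdn_mulr.
pose KG := Group (KG_group d m mD).
pose K := (H :&: KG)%G.
have hA : #|KG| <= n * #|K| := stepA _ n H KG hn.
have cmw : coprime (m * w) p by rewrite coprime_sym coprimeMr cpm cpw.
have hB := stepB p q (m * w) pp pq cmw.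
have eD : m * q %| d.+2 by rewrite -em.
have hC := stepC d p _ m w q pp m0 wq dw eD.
rewrite -em in hC.
set Ec := #|[set l : {unit 'Z_(d.+2)} | _]| in hC.
set G := #|[set j : 'I_q | _]| in hB hC.
have hK : 2 * (q %/ (4 * n)) * Ec <= #|K|.
  have h1 : q * Ec <= 2 * n * #|K|.
    apply: (leq_trans (n := 2 * G * Ec)); first by rewrite leq_mul2r hB orbT.
    have hC' : G * Ec <= #|KG| := hC.
    rewrite -mulnA -mulnA leq_mul2l; apply/orP; right; exact: leq_trans hC' hA.
  have h2 : q %/ (4 * n) * (4 * n) <= q by apply: leq_trunc_div.
  exact: arith1 n0 h1 h2.
have KsH : K \subset H by apply: subsetIl.
have KsG : K \subset [set k : {unit 'Z_(d.+2)} | tv k %% m == 1 %% m] by apply: subsetIr.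
have hsum t : t \in H -> e * #|K| <= 16 * n * \sum_(k in K) (tv (t * k)%g * b) %% e.
  move=> tH; apply: (sumK_bound d e m q b n K t n0 em m0 ed _ KsG qN hK).
  rewrite coprimeMl cb andbT coprime_sym.
  exact: coprime_dvdl ed (tv_coprime d t).
have reidx k : k \in H -> \sum_(t in H) (tv (t * k)%g * b) %% e = \sum_(t in H) (tv t * b) %% e.
  move=> kH; rewrite [RHS](reindex_inj (mulIg k)) /=.
  by apply: eq_bigl => t; rewrite groupMr.
have K0 := cardG_gt0 K.
rewrite -(leq_pmul2r K0).
have -> : e * #|H| * #|K| = \sum_(t in H) e * #|K|.
  by rewrite sum_nat_const; lia.
apply: (leq_trans (n := \sum_(t in H) 16 * n * \sum_(k in K) (tv (t * k)%g * b) %% e)).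
  by apply: leq_sum => t tH; apply: hsum.
rewrite -big_distrr /= exchange_big /=.
rewrite (eq_bigr (fun _ => \sum_(t in H) (tv t * b) %% e)); last first.
  move=> k kK; apply: reidx; exact: (subsetP KsH).
by rewrite sum_nat_const -[X in _ <= X]mulnA (mulnC (\sum_(t in H) _)).
Qed.


Lemma main_nat n d e b (H : {group {unit 'Z_(d.+2)}}) :
  0 < n -> e %| d.+2 -> 1 < e -> coprime b e ->
  #|[set: {unit 'Z_(d.+2)}] : H|%g <= n ->
  e * #|H| <= maxn (16 * n) ((4 * n) ^ (4 * n)) * \sum_(t in H) (tv t * b) %% e.
Proof.
move=> n0 ed e1 cb hn.
case: (boolP [exists p : 'I_e.+1, 4 * n <= p ^ logn p e]).
  move/existsP => [p hp].
  case: (boolP (prime p)) => pp; last first.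
    by move: hp; rewrite lognE (negbTE pp) /= expn0; lia.
  apply: (leq_trans (big_case n d e b p H n0 ed e1 cb hn pp hp)).
  by rewrite leq_mul2r leq_maxl orbT.
rewrite negb_exists => /forallP hall.
have hb : e <= (4 * n) ^ (4 * n).
  apply: bound_e; [lia | lia |] => p hp.
  by have := hall (Ordinal hp); rewrite /= -ltnNge.
have hs : #|H| <= \sum_(t in H) (tv t * b) %% e.
  rewrite -sum1_card; apply: leq_sum => t _.
  rewrite lt0n; apply/negP => /eqP h0.
  have : coprime ((tv t * b) %% e) e.
    rewrite coprime_modl coprimeMl cb andbT coprime_sym.
    exact: coprime_dvdl ed (tv_coprime d t).
  rewrite h0 /coprime gcd0n => /eqP h1; move: e1; rewrite h1.
  by [].
apply: (leq_trans (leq_mul hb hs)).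
by rewrite leq_mul2r leq_maxr orbT.
Qed.


Local Open Scope ring_scope.

Theorem corollary2p7 (n : nat) : (0 < n)%N ->
  exists delta : rat, 0 < delta /\
    forall (d : nat) (a : 'Z_d) (H : {group {unit 'Z_d}}),
      (2 <= d)%N -> a != 0 ->
      (#|[set: {unit 'Z_d}] : H|%g <= n)%N ->
      delta < (#|H|%:R)^-1 * \sum_(t in H) fracZ (val t * a).
Proof.
move=> n0.
set C := maxn (16 * n) ((4 * n) ^ (4 * n)).
have C0 : (0 < C)%N by rewrite leq_max muln_gt0 n0.
exists (C.*2%:R)^-1; split; first by rewrite invr_gt0 ltr0n double_gt0.
case=> [|[|d]] // a H _ a0 hn.
set D := d.+2.
set A := nat_of_ord a.
have A0 : (0 < A)%N.
  rewrite lt0n; apply/negP => /eqP h; move: a0; apply/negP; rewrite negbK.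
  by apply/eqP; apply: val_inj.
have AD : (A < D)%N by apply: ltn_ord.
set g := gcdn A D.
have g0 : (0 < g)%N by rewrite gcdn_gt0 A0.
set e := (D %/ g)%N. set b := (A %/ g)%N.
have De : D = (e * g)%N by rewrite divnK // dvdn_gcdr.
have Ab : A = (b * g)%N by rewrite divnK // dvdn_gcdl.
have ed : (e %| D)%N by rewrite De dvdn_mulr.
have e1 : (1 < e)%N.
  have gA : (g <= A)%N by apply: dvdn_leq => //; rewrite dvdn_gcdl.
  rewrite ltnNge; apply/negP => h.
  have : (D <= g)%N by rewrite De; rewrite -{2}(mul1n g) leq_mul2r h orbT.
  lia.
have cb : coprime b e.
  rewrite /coprime; apply/eqP.
  have : (gcdn b e * g = g)%N by rewrite muln_gcdl -Ab -De.
  by move/eqP; rewrite -{2}(mul1n g) eqn_pmul2r // => /eqP.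
have hm := main_nat n d e b H n0 ed e1 cb hn.
rewrite -/C in hm.
have fr t : t \in H -> fracZ (val t * a) = ((tv t * b) %% e)%:R / e%:R.
  move=> _; rewrite /fracZ.
  have -> : nat_of_ord (val t * a) = ((tv t * A) %% D)%N by [].
  rewrite Ab De mulnA -muln_modl natrM.
  rewrite [X in _ / X](_ : _ = (e * g)%:R); last by rewrite -De.
  rewrite natrM.
  rewrite -mulf_div divff ?mulr1 // pnatr_eq0 -lt0n //.
rewrite (eq_bigr _ fr) -mulr_suml -natr_sum.
set S := (\sum_(t in H) _)%N in hm *.
have H0 : (0 < #|H|)%N := cardG_gt0 H.
have e0 : (0 < e)%N by lia.
rewrite mulrCA -invfM -natrM.
rewrite ltr_pdivlMr ?ltr0n ?muln_gt0 ?e0 ?H0 // mulrC ltr_pdivrMr ?ltr0n ?double_gt0 //.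
rewrite -natrM ltr_nat.
have S0 : (0 < S)%N.
  rewrite lt0n; apply/negP => /eqP s0; move: hm; rewrite s0 muln0 leqn0 muln_eq0.
  by case/orP => /eqP; lia.
move: hm; set h := #|H|; nia.
Qed.
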